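(* Let $m\ge 1$ and $n=2m$. For each integer $k$ with $0\le k\le 2^m$ define $$S_k=\{\,j\in\mathbb{Z}/(2^m-1)\mathbb{Z}\;:\;\mathrm{wt}_n\big((2^m+1)j+(2^m-1)k\big)<m\,\}.$$ Then $|S_k|\le 2^{m-1}$ for every $0\le k\le 2^m$, and equality $|S_k|=2^{m-1}$ holds if and only if $m$ is odd and $k=0$.
   Context: For a positive integer $n$ and an integer $u$, $\mathrm{wt}_n(u)$ denotes the number of 1's in the binary expansion of the unique representative of $u$ modulo $2^n-1$ lying in $\{0,1,\ldots,2^n-2\}$. (Note that $\mathrm{wt}_n((2^m+1)j+(2^m-1)k)$ depends only on $j$ modulo $2^m-1$ when $k$ is fixed.) *)

(* Defs.v *)
From mathcomp Require Import all_boot.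
Set Implicit Arguments. Unset Strict Implicit. Unset Printing Implicit Defensive.

(* Number of 1's in the binary expansion of u (fuel u suffices since
   u has at most u bits). *)
Fixpoint popcount_aux (fuel u : nat) : nat :=
  match fuel with
  | 0 => 0
  | f.+1 => odd u + popcount_aux f u./2
  end.
Definition popcount (u : nat) : nat := popcount_aux u u.

(* wt_n(u): weight of the representative of u modulo 2^n - 1 in
   {0, ..., 2^n - 2}.  Only used on nonnegative arguments here. *)
Definition wt (n u : nat) : nat := popcount (u %% (2 ^ n - 1)).

(* S_k, with j in Z/(2^m-1)Z represented by its representative in 'I_(2^m-1). *)
Definition Sk (m k : nat) : {set 'I_(2 ^ m - 1)} :=
  [set j : 'I_(2 ^ m - 1) | wt (2 * m) ((2 ^ m + 1) * j + (2 ^ m - 1) * k) < m].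

(* Main.v *)
Require Import Defs.
From mathcomp Require Import all_boot.
From mathcomp Require Import zify.


Lemma pa_stable f u : u <= f -> popcount_aux f u = popcount_aux f.+1 u.
Proof.
elim: f u => [|f IH] u hu /=.
  by move: hu; rewrite leqn0 => /eqP ->.
rewrite IH //.
have := odd_double_half u; lia.
Qed.

Lemma pa_ge f u : u <= f -> popcount_aux f u = popcount u.
Proof.
move=> h; rewrite /popcount -(subnK h).
elim: (f - u) => [|d IH] //.
by rewrite addSn -pa_stable // leq_addl.
Qed.

Lemma pc_step u : popcount u = odd u + popcount u./2.
Proof.
case: u => [|v] //.
rewrite /popcount /= pa_ge //.
have := odd_double_half v.+1; lia.
Qed.

Lemma pc0 : popcount 0 = 0. Proof. by []. Qed.

Lemma pc_bd (b : bool) n : popcount (b + n.*2) = b + popcount n.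
Proof. rewrite pc_step half_bit_double oddD odd_double addbF. by case: b. Qed.

Lemma pc_split m a b : b < 2 ^ m -> popcount (a * 2 ^ m + b) = popcount a + popcount b.
Proof.
elim: m a b => [|m IH] a b hb.
  by move: hb; rewrite expn0 ltnS leqn0 => /eqP ->; rewrite muln1 addn0 pc0 addn0.
have -> : a * 2 ^ m.+1 + b = odd b + (a * 2 ^ m + b./2).*2.
  have := odd_double_half b; rewrite expnS -!muln2; lia.
rewrite pc_bd IH; last first.
  have := odd_double_half b; move: hb; rewrite expnS -!muln2; lia.
rewrite [popcount b]pc_step; lia.
Qed.

Lemma pc_compl m x : x < 2 ^ m -> popcount (2 ^ m - 1 - x) + popcount x = m.
Proof.
elim: m x => [|m IH] x hx.
  by move: hx; rewrite expn0 ltnS leqn0 => /eqP ->.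
have e := odd_double_half x.
have -> : 2 ^ m.+1 - 1 - x = (~~ odd x) + (2 ^ m - 1 - x./2).*2.
  move: hx e; rewrite expnS -!muln2; case: (odd x) => /=; lia.
rewrite pc_bd [popcount x]pc_step.
have h2 : x./2 < 2 ^ m by move: hx e; rewrite expnS -!muln2; lia.
have := IH _ h2; case: (odd x) => /=; lia.
Qed.


Lemma rot m r : 1 <= m -> r < 2 ^ m * 2 ^ m - 1 ->
  let v := (2 ^ m * r) %% (2 ^ m * 2 ^ m - 1) in
  popcount v = popcount r /\ (0 < r -> 0 < v).
Proof.
move=> hm hr.
have hX : 2 <= 2 ^ m by rewrite -{1}(expn1 2) leq_exp2l.
have ha : r %/ 2 ^ m < 2 ^ m by rewrite ltn_divLR; lia.
have hb : r %% 2 ^ m < 2 ^ m by rewrite ltn_pmod; lia.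
have hr' := divn_eq r (2 ^ m).
move: hr ha hb hr'; set X := 2 ^ m; set a := r %/ X; set b := r %% X => hr ha hb hr'.
set N := X * X - 1 in hr *.
have hXX : X <= X * X by rewrite leq_pmull; lia.
have hN : X * X = N + 1 by rewrite /N; lia.
have e1 : X * r = a * N + (b * X + a).
  rewrite hr' mulnDr mulnCA hN mulnDr muln1 [X * b]mulnC; lia.
have e2 : b * X + a < N.
  have hb' : b <= X - 1 by lia.
  have ha' : a <= X - 1 by lia.
  have e3 : (X - 1) * X = X * X - X by rewrite mulnBl mul1n.
  have [hbe|hbl] := eqVneq b (X - 1).
    have : a < X - 1.
      rewrite ltn_neqAle ha' andbT; apply/eqP => hae.
      move: hr; rewrite hr' hae hbe e3; lia.
    rewrite hbe e3; lia.
  have : b <= X - 2 by lia.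
  move=> h; have := leq_mul h (leqnn X); rewrite mulnBl; lia.
move=> v.
have hv : v = b * X + a by rewrite /v e1 modnMDl modn_small.
split.
  by rewrite hv hr' !pc_split // addnC.
rewrite hv hr'; move: (a) (b) => a0 b0.
case: a0 => [|a']; case: b0 => [|b'] //=; lia.
Qed.

Lemma oddM1 m : 1 <= m -> odd (2 ^ m - 1).
Proof.
case: m => // m _; rewrite expnS.
have h : 0 < 2 ^ m by rewrite expn_gt0.
have -> : 2 * 2 ^ m - 1 = true + (2 ^ m - 1).*2 by rewrite -muln2; lia.
by rewrite oddD odd_double.
Qed.

Lemma A1 X k : 1 <= X -> (X + 1) * 0 + (X - 1) * k + X * ((X + 1) * 0 + (X - 1) * k) = (X - 1) * (X + 1) * k.
Proof.
move=> h; have -> : X = (X - 1) + 1 by lia.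
move: (X - 1) => Y. rewrite addnK. nia.
Qed.
Lemma A2 X j k : j < X - 1 -> (X + 1) * (X - 1 - j) + (X - 1) * k + X * ((X + 1) * j + (X - 1) * k) = (X - 1) * (X + 1) * (1 + j + k).
Proof.
move=> h; have -> : X = (X - 1 - j) + j + 1 by lia.
move: (X - 1 - j) => W. rewrite addnK addnK. nia.
Qed.

Lemma exp2m m : 2 ^ (2 * m) = 2 ^ m * 2 ^ m.
Proof. by rewrite mul2n -addnn expnD. Qed.

Lemma W m k j : 1 <= m -> k <= 2 ^ m -> j < 2 ^ m - 1 -> (0 < j) || (0 < k) ->
  let f i := wt (2 * m) ((2 ^ m + 1) * i + (2 ^ m - 1) * k) in
  f j + f (if j == 0 then 0 else 2 ^ m - 1 - j) = 2 * m.
Proof.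
move=> hm hk hj hjk f; rewrite /f /wt exp2m.
have hX : 2 <= 2 ^ m by rewrite -{1}(expn1 2) leq_exp2l.
have hc := pc_compl (2 * m).
rewrite exp2m in hc.
move: hk hj hjk hc; set X := 2 ^ m => hk hj hjk hc.
set N := X * X - 1.
have hNM : N = (X - 1) * (X + 1) by rewrite /N; nia.
have hN0 : 0 < N by rewrite /N; nia.
set u := fun i => (X + 1) * i + (X - 1) * k.
rewrite -/(u j) -/(u (if j == 0 then 0 else X - 1 - j)).
set r := u j %% N.
have hr : r < N by rewrite ltn_pmod.
have hr0 : 0 < r.
  rewrite lt0n; apply/negP => /eqP hd0.
  have : N %| u j by rewrite /dvdn -/r hd0.
  rewrite hNM => hd.
  have hM : X - 1 %| u j := dvdn_trans (dvdn_mulr _ _) hd.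
  have hoM : odd (X - 1) by exact: oddM1.
  have hj0 : j = 0.
    have e : u j = (X - 1) * (j + k) + j * 2.
      rewrite /u mulnDr mulnDl mulnBl !mul1n; have := leq_pmull j (ltnW hX); clear -hX; lia.
    move: hM; rewrite e (dvdn_addr _ (dvdn_mulr _ (dvdnn _))).
    rewrite Gauss_dvdl ?coprimen2 //.
    case: (posnP j) => // hjp hd2; have := dvdn_leq hjp (hd2 (dvdnn _)); move: hj; clear; lia.
  move: hd hjk; rewrite /u hj0 muln0 add0n dvdn_pmul2l /=; last by move: hX; clear; lia.
  move=> hd hk0; have := dvdn_leq hk0 hd; move: hk; clear; lia.
have [hpv hv0] := @rot m r hm hr.
set v := (X * r) %% N in hpv hv0.
have hvN : v < N by rewrite ltn_pmod.
set r' := u _ %% N.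
have hr'N : r' < N by rewrite ltn_pmod.
have hc0 : exists c, u (if j == 0 then 0 else X - 1 - j) + X * u j = N * c.
  rewrite /u; case: eqP => [->|/eqP hj0].
    exists k; rewrite hNM; apply: A1; lia.
  exists (1 + j + k); rewrite hNM; exact: A2.
have hsum : r' + v = N.
  case: hc0 => c hc0.
  have : (r' + v) %% N = 0.
    by rewrite /r' /v /r modnMmr modnDm hc0 mulnC modnMl.
  have hv := hv0 hr0.
  move=> h0; have := divn_eq (r' + v) N; rewrite h0 addn0.
  move: hv hvN hr'N; clearbody r' v; clear -N.
  case: ((r' + v) %/ N) => [|[|q]]; rewrite ?mul0n ?mul1n ?mulSn; lia.
have hvX : v < X * X by move: hvN; rewrite /N; clearbody v; clear; lia.
have := hc v hvX.
rewrite -/N -hsum addnK -hpv; clearbody r r' v; clear; lia.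
Qed.


Lemma pairs (T : finType) (z : T) (g : T -> T) (P : pred T) :
  involutive g -> (forall x, (g x == z) = (x == z)) ->
  (forall x, x != z -> P x -> ~~ P (g x)) ->
  2 * #|[set x | (x != z) && P x]| + #|[set x | [&& x != z, ~~ P x & ~~ P (g x)]]| = #|T|.-1.
Proof.
move=> hg hz hP.
set A := [set x | (x != z) && P x]; set C := [set x | [&& x != z, ~~ P x & ~~ P (g x)]].
have hB : #|g @: A| = #|A| by apply: card_imset; exact: inv_inj.
have hBm : forall x, (x \in g @: A) = (g x \in A).
  move=> x; apply/imsetP/idP => [[y hy ->]|hx]; first by rewrite hg.
  by exists (g x); rewrite ?hg.
have hPg : forall x, x != z -> P (g x) -> ~~ P x.
  move=> x hx hpx; have := hP (g x); rewrite hg hz => /(_ hx hpx) //.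
have e1 : A :&: g @: A = set0.
  apply/setP => x; rewrite !inE hBm !inE hz.
  case hx: (x == z) => //=; case hp: (P x) => //=.
  by apply/negbTE/(hP x); rewrite ?hx.
have e2 : (A :|: g @: A) :&: C = set0.
  apply/setP => x; rewrite !inE hBm !inE hz.
  by case: (x == z) (P x) (P (g x)) => [] [] [].
have e3 : (A :|: g @: A) :|: C = [set~ z].
  apply/setP => x; rewrite !inE hBm !inE hz.
  by case: (x == z) (P x) (P (g x)) => [] [] [].
have := cardsC1 z; rewrite -e3 cardsU e2 cards0 subn0 cardsU e1 cards0 subn0 hB => h.
lia.
Qed.


Lemma f0 m j : 1 <= m -> j < 2 ^ m - 1 ->
  wt (2 * m) ((2 ^ m + 1) * j + (2 ^ m - 1) * 0) = 2 * popcount j.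
Proof.
move=> hm hj; rewrite muln0 addn0 /wt exp2m.
have -> : (2 ^ m + 1) * j = j * 2 ^ m + j by rewrite mulnDl mul1n mulnC.
have hX : 2 <= 2 ^ m by rewrite -{1}(expn1 2) leq_exp2l.
move: hj hX; set X := 2 ^ m => hj hX.
rewrite modn_small.
  rewrite pc_split; [lia | lia].
have h1 : j <= X - 2 by lia.
have := leq_mul h1 (leqnn X); rewrite mulnBl.
have : X <= X * X by rewrite leq_pmull; lia.
lia.
Qed.

Theorem proposition2 (m : nat) (hm : 1 <= m) :
  (forall k : nat, k <= 2 ^ m -> #|Sk m k| <= 2 ^ (m - 1)) /\
  (forall k : nat, k <= 2 ^ m -> (#|Sk m k| = 2 ^ (m - 1) <-> odd m /\ k = 0)).
Proof.
have hX : 2 <= 2 ^ m by rewrite -{1}(expn1 2) leq_exp2l.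
have hM0 : 0 < 2 ^ m - 1 by lia.
have e2 : 2 ^ m = 2 * 2 ^ (m - 1) by rewrite -expnS; congr (2 ^ _); lia.
have hpos : 1 <= 2 ^ (m - 1) by rewrite expn_gt0.
pose z : 'I_(2 ^ m - 1) := Ordinal hM0.
have hneg : forall j : 'I_(2 ^ m - 1),
    (if nat_of_ord j == 0 then 0 else 2 ^ m - 1 - j) < 2 ^ m - 1.
  move=> j; have := ltn_ord j; case: (posnP (nat_of_ord j)) => h /= hl; lia.
pose g (j : 'I_(2 ^ m - 1)) : 'I_(2 ^ m - 1) := Ordinal (hneg j).
have hv : forall x y : 'I_(2 ^ m - 1), (x == y) = (val x == val y) by [].
have hg : involutive g.
  move=> j; apply: val_inj => /=; have := ltn_ord j.
  case: (posnP (nat_of_ord j)) => h /= hl; first lia.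
  rewrite ifF; first lia.
  apply/negbTE; lia.
have hz : forall x, (g x == z) = (x == z).
  move=> x; rewrite !hv /=; have := ltn_ord x.
  case: (posnP (nat_of_ord x)) => h /= hl; first lia.
  apply/negbTE; lia.
pose f k (j : 'I_(2 ^ m - 1)) := wt (2 * m) ((2 ^ m + 1) * j + (2 ^ m - 1) * k).
pose P k := [pred j : 'I_(2 ^ m - 1) | f k j < m].
have hW : forall k x, k <= 2 ^ m -> (0 < nat_of_ord x) || (0 < k) -> f k x + f k (g x) = 2 * m.
  move=> k x hk h; have := W m k x hm hk (ltn_ord x) h; rewrite /=; exact.
have hP : forall k, k <= 2 ^ m -> forall x, x != z -> P k x -> ~~ P k (g x).
  move=> k hk x hx; rewrite !inE.
  have : 0 < nat_of_ord x by move: hx; rewrite hv /=; lia.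
  move=> hx0; have := hW k x hk; rewrite hx0 => /(_ isT); lia.
have main : forall k, k <= 2 ^ m ->
    [/\ #|Sk m k| = #|[set x | (x != z) && P k x]| + (k == 0),
        2 * #|[set x | (x != z) && P k x]| +
          #|[set x | [&& x != z, ~~ P k x & ~~ P k (g x)]]| = 2 ^ m - 2
      & k = 0 -> (#|[set x | [&& x != z, ~~ P k x & ~~ P k (g x)]]| == 0) = odd m].
  move=> k hk; split.
  - rewrite [LHS](cardsD1 z) [LHS]addnC.
    have -> : Sk m k :\ z = [set x | (x != z) && P k x].
      by apply/setP => x; rewrite !inE andbC.
    have -> : (z \in Sk m k) = (k == 0); last by [].
    rewrite inE; case: (posnP k) => [->|hk0].
      by rewrite /f /wt /= !muln0 mod0n /= pc0 hm.
    have := hW k z hk; rewrite hk0 orbT => /(_ isT) /=.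
    rewrite /f /= => h.
    apply/negbTE; lia.
  - by rewrite (pairs _ _ _ _ hg hz (hP k hk)) card_ord; lia.
  move=> hk0; subst k.
  have hf0 : forall x : 'I_(2 ^ m - 1), f 0 x = 2 * popcount x.
    by move=> x; rewrite /f f0 // ltn_ord.
  case: (boolP (odd m)) => hodd.
    rewrite cards_eq0; apply/eqP/setP => x; rewrite !inE.
    case hx: (x == z) => //=.
    have hx0 : 0 < nat_of_ord x by move: hx; rewrite hv /=; lia.
    have := hW 0 x (leq0n _); rewrite hx0 => /(_ isT) hs.
    apply/negP => /andP [h1 h2].
    have e : f 0 x = m by lia.
    by move: hodd; rewrite -e hf0 oddM.
  apply/negbTE; rewrite cards_eq0; apply/set0Pn.
  have hm2 : m = m./2 * 2.
    by have := odd_double_half m; rewrite (negbTE hodd) -muln2 add0n.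
  set h := m./2 in hm2.
  have hh : 2 <= 2 ^ h by rewrite -{1}(expn1 2) leq_exp2l; lia.
  have hj0 : 2 ^ h - 1 < 2 ^ m - 1.
    have : 2 ^ h < 2 ^ m by rewrite ltn_exp2l; lia.
    lia.
  exists (Ordinal hj0); rewrite !inE.
  have hpc : popcount (2 ^ h - 1) = h.
    by have := pc_compl h 0 (expn_gt0 _ _); rewrite subn0 pc0 addn0.
  have e1 : f 0 (Ordinal hj0) = m by rewrite hf0 /= hpc; lia.
  have hx0 : 0 < nat_of_ord (Ordinal hj0) by rewrite /=; lia.
  have := hW 0 (Ordinal hj0) (leq0n _); rewrite hx0 => /(_ isT); rewrite e1 => e3.
  apply/and3P; split; [rewrite hv /=; lia | by rewrite ltnn | lia].
split.
  move=> k hk; have [h1 h2 _] := main k hk; rewrite h1.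
  move: (k == 0) => b; have := leq_b1 b; lia.
move=> k hk; have [h1 h2 h3] := main k hk; rewrite h1.
case: (posnP k) => [hk0|hk0].
  subst k; move: (h3 erefl) h2; rewrite (_ : nat_of_bool (0 == 0) = 1) //.
  case: (odd m) => hc h2.
    move/eqP: hc => hc; split => // _; lia.
  split => // H; move/negbT: hc; rewrite -lt0n => hc; lia.
rewrite (_ : nat_of_bool false = 0) // addn0.
split; last by case=> _ hk1; lia.
lia.
Qed.
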